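(* Let $l\in\mathbb N-\frac12$ and let $V$ be a simple weight $(\mathbb Ch+\tilde{\mathcal H}^{(l)})$-module on which $z$ acts as a nonzero scalar $\dot z$, such that $\mathrm{supp}(V)\subseteq\lambda+\mathbb Z$ for some $\lambda\in\mathbb C$ with $\dim V_\lambda<\infty$. (i) If $l=\frac12$, then $V$ is a highest weight module, or a lowest weight module, or $V$ is isomorphic to $D(a,\dot z)$ for some $a\in\mathbb C\setminus\mathbb Z$, where $h$ acts on $D(a,\dot z)$ by $hx^i=(\mu-i)x^i$ for some $\mu\in\mathbb C$. (ii) If $l\in\mathbb N+\frac12$ (i.e. $l\ge\frac32$), then $V$ is a highest weight module or a lowest weight module.
   Context: For $l\in\mathbb N-\frac12$, $\tilde{\mathcal H}^{(l)}$ has basis $p_0,\dots,p_{2l},z$ with $z$ central and $[p_k,p_{k'}]=\delta_{k+k',2l}(-1)^{k+l+\frac12}k!(2l-k)!\,z$; the Lie algebra $\mathbb Ch+\tilde{\mathcal H}^{(l)}$ has additionally $[h,p_k]=2(l-k)p_k$, $[h,z]=0$. A weight module is one on which $h$ acts diagonalizably; $V_\lambda=\{v:hv=\lambda v\}$, $\mathrm{supp}(V)=\{\lambda:V_\lambda\ne0\}$. A highest (resp. lowest) weight module is one generated by a weight vector annihilated by all $p_k$ with $k<l$ (resp. $k>l$). For $\dot z\ne0$ and $a\in\mathbb C$, $D(a,\dot z)$ is the $\tilde{\mathcal H}^{(1/2)}$-module $\mathbb C[x,x^{-1}]$ with $p_1x^i=x^{i+1}$, $p_0x^i=-\dot z(a+i)x^{i-1}$,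 $zx^i=\dot zx^i$ ($i\in\mathbb Z$). *)

(* Defs.v *)
From HB Require Import structures.
From mathcomp Require Import all_boot all_order all_algebra.
Set Implicit Arguments. Unset Strict Implicit. Unset Printing Implicit Defensive.
Import Order.TTheory GRing.Theory Num.Theory.
Local Open Scope ring_scope.

(* Throughout, l = n + 1/2 with n : nat, so 2l = 2n+1 = n.*2.+1,
   the basis of the Heisenberg part is p_0, ..., p_(2n+1), z, and h is the
   extra grading element. *)

Section Heisenberg.
Variables (C : numClosedFieldType) (V : lmodType C) (n : nat).
Variables (h z : {linear V -> V}) (p : nat -> {linear V -> V}).

(* The operators define a representation of  C h + H~^(l),  l = n + 1/2:
   [p_k,p_k'] = delta_{k+k',2l} (-1)^(k+l+1/2) k! (2l-k)! z,
   [h,p_k] = 2(l-k) p_k, [h,z] = 0, z central. *)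
Definition is_rep : Prop :=
  [/\ (forall k k', (k <= n.*2.+1)%N -> (k' <= n.*2.+1)%N -> forall v,
        p k (p k' v) - p k' (p k v) =
        (if (k + k' == n.*2.+1)%N
         then (-1) ^+ (k + n + 1) * ((k`! * (n.*2.+1 - k)`!)%N)%:R
         else 0) *: z v),
      (forall k, (k <= n.*2.+1)%N -> forall v,
        h (p k v) - p k (h v) = ((n.*2.+1)%:R - (k.*2)%:R) *: p k v),
      (forall k, (k <= n.*2.+1)%N -> forall v, z (p k v) - p k (z v) = 0)
    & (forall v, h (z v) - z (h v) = 0)].

Definition submodule (P : V -> Prop) : Prop :=
  [/\ P 0, (forall u v, P u -> P v -> P (u + v)),
      (forall (a : C) v, P v -> P (a *: v))
    & [/\ (forall v, P v -> P (h v)), (forall v, P v -> P (z v))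
    & (forall k, (k <= n.*2.+1)%N -> forall v, P v -> P (p k v))]].

Definition simple_module : Prop :=
  (exists v : V, v != 0) /\
  forall P, submodule P -> (forall v, P v -> v = 0) \/ (forall v, P v).

Definition weight_module : Prop :=
  forall v : V, exists s : seq (C * V),
    (forall x, x \in s -> h x.2 = x.1 *: x.2) /\ v = \sum_(x <- s) x.2.

Definition weight_space (mu : C) (v : V) : Prop := h v = mu *: v.

Definition in_supp (mu : C) : Prop := exists v : V, v != 0 /\ weight_space mu v.

Definition fin_dim (P : V -> Prop) : Prop :=
  exists s : seq V, forall v, P v ->
    exists c : 'I_(size s) -> C, v = \sum_(i < size s) c i *: s`_i.

Definition generated_by (v : V) : Prop :=
  forall P, submodule P -> P v -> forall w, P w.

(* highest weight module: generated by a weight vector killed by p_k, k < l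
   (i.e. k <= n) *)
Definition highest_weight_module : Prop :=
  exists (v : V) (mu : C), [/\ weight_space mu v,
    (forall k, (k <= n)%N -> p k v = 0) & generated_by v].

(* lowest weight module: generated by a weight vector killed by p_k, k > l
   (i.e. n < k <= 2n+1) *)
Definition lowest_weight_module : Prop :=
  exists (v : V) (mu : C), [/\ weight_space mu v,
    (forall k, (n < k <= n.*2.+1)%N -> p k v = 0) & generated_by v].

Definition is_basis_Z (e : int -> V) : Prop :=
  (forall (s : seq int) (c : int -> C), uniq s ->
     \sum_(i <- s) c i *: e i = 0 -> forall i, i \in s -> c i = 0) /\
  (forall v : V, exists (s : seq int) (c : int -> C), v = \sum_(i <- s) c i *: e i).

(* V is isomorphic to D(a, zd) with h x^i = (mu - i) x^i: there is a basis
   (e_i)_{i in Z} of V (the image of x^i) on which the operators act as on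
   the Laurent polynomial module D(a, zd). *)
Definition iso_D (a zd mu : C) : Prop :=
  exists e : int -> V, is_basis_Z e /\
    forall i : int,
      [/\ p 1 (e i) = e (i + 1),
          p 0 (e i) = (- (zd * (a + i%:~R))) *: e (i - 1),
          z (e i) = zd *: e i
        & h (e i) = (mu - i%:~R) *: e i].

End Heisenberg.

(* Main.v *)
Require Import Defs.
From HB Require Import structures.
From mathcomp Require Import all_boot all_order all_algebra.
From mathcomp Require Import ring zify.
From Stdlib Require Import Classical.
Import Order.TTheory GRing.Theory Num.Theory.
Local Open Scope ring_scope.

Set Implicit Arguments. Unset Strict Implicit. Unset Printing Implicit Defensive.

Section Gen.
Variables (C : numClosedFieldType) (V : lmodType C).
Implicit Types (f g A B H : {linear V -> V}) (v w : V).

Lemma iter_lin0 f m : iter m f 0 = 0.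
Proof. by elim: m => //= m ->; rewrite linear0. Qed.
Lemma iter_linD f m u v : iter m f (u + v) = iter m f u + iter m f v.
Proof. by elim: m => //= m ->; rewrite linearD. Qed.
Lemma iter_linZ f m (a : C) v : iter m f (a *: v) = a *: iter m f v.
Proof. by elim: m => //= m ->; rewrite linearZ. Qed.
Lemma iter_linN f m v : iter m f (- v) = - iter m f v.
Proof. by rewrite -scaleN1r iter_linZ scaleN1r. Qed.
Lemma iter_linB f m u v : iter m f (u - v) = iter m f u - iter m f v.
Proof. by rewrite iter_linD iter_linN. Qed.

Lemma iter_comm f g m v : (forall v, f (g v) = g (f v)) ->
  f (iter m g v) = iter m g (f v).
Proof. by move=> fg; elim: m => //= m IH; rewrite fg IH. Qed.

Lemma iter_inj f m v : (forall v, f v = 0 -> v = 0) -> iter m f v = 0 -> v = 0.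
Proof. by move=> fi; elim: m => //= m IH /fi. Qed.

Lemma iter_add f m k v : iter (m + k) f v = iter m f (iter k f v).
Proof. exact: iterD. Qed.

Lemma iter_wt H f (d mu : C) m v : (forall v, H (f v) - f (H v) = d *: f v) ->
  H v = mu *: v -> H (iter m f v) = (mu + m%:R * d) *: iter m f v.
Proof.
move=> Hf Hv; elim: m => [|m IH] /=; first by rewrite mul0r addr0.
have := Hf (iter m f v); rewrite IH linearZ => /eqP; rewrite subr_eq => /eqP ->.
by rewrite /= -scalerDl; congr (_ *: _); rewrite mulrSr mulrDl mul1r; ring.
Qed.

Lemma heisA A B (c t : C) m v : (forall v, A (B v) - B (A v) = c *: v) ->
  A (B v) = t *: v -> A (B (iter m B v)) = (t + m%:R * c) *: iter m B v.
Proof.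
move=> AB Ev; elim: m => [|m IH] /=; first by rewrite mul0r addr0.
have := AB (B (iter m B v)); rewrite IH linearZ => /eqP; rewrite subr_eq => /eqP ->.
by rewrite /= -scalerDl; congr (_ *: _); rewrite mulrSr mulrDl mul1r; ring.
Qed.

Lemma heisB A B (c t : C) m v : (forall v, A (B v) - B (A v) = c *: v) ->
  A (B v) = t *: v -> A (B (iter m A v)) = (t - m%:R * c) *: iter m A v.
Proof.
move=> AB Ev; elim: m => [|m IH] /=; first by rewrite mul0r subr0.
have e1 : B (A (iter m A v)) = A (B (iter m A v)) - c *: iter m A v.
  by rewrite -(AB (iter m A v)) opprB addrC subrK.
rewrite e1 linearB IH linearZ linearZ -scalerBl.
congr (_ *: _); rewrite mulrSr mulrDl mul1r; ring.
Qed.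

End Gen.

Section Gen2.
Variables (C : numClosedFieldType) (V : lmodType C).

Lemma eig_indep (X : eqType) (F : {linear V -> V}) (s : seq X) (u : X -> V)
    (ev : X -> C) :
  uniq s -> {in s &, injective ev} -> (forall x, x \in s -> F (u x) = ev x *: u x) ->
  \sum_(x <- s) u x = 0 -> forall x, x \in s -> u x = 0.
Proof.
elim: s u => [|y s IH] u //= /andP[ys us] inj eig.
rewrite big_cons => S0.
have S1 : \sum_(x <- s) (ev x - ev y) *: u x = 0.
  have := congr1 (fun w => F w - ev y *: w) S0.
  rewrite /= linear0 scaler0 subr0 linearD linear_sum eig ?mem_head //.
  rewrite scalerDr opprD addrACA subrr add0r.
  move=> E; rewrite -[X in _ = X]E scaler_sumr -sumrB; apply: eq_big_seq => x xs.
  by rewrite eig ?in_cons ?xs ?orbT // scalerBl.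
have u0 : forall x, x \in s -> u x = 0.
  move=> x xs.
  have inj' : {in s &, injective ev}.
    by move=> a b ha hb; apply: inj; rewrite in_cons ?ha ?hb orbT.
  have eig' : forall x, x \in s -> F ((ev x - ev y) *: u x) = ev x *: ((ev x - ev y) *: u x).
    move=> a ha; rewrite linearZ /= eig ?in_cons ?ha ?orbT //.
    by rewrite !scalerA mulrC.
  have := IH (fun x => (ev x - ev y) *: u x) us inj' eig' S1 x xs.
  move/eqP; rewrite scaler_eq0 subr_eq0 => /orP[/eqP e|/eqP //].
  have := inj x y; rewrite in_cons xs orbT mem_head => /(_ isT isT e) xy.
  by move: ys; rewrite -xy xs.
move=> x; rewrite in_cons => /orP[/eqP ->|]; last exact: u0.
by move: S0; rewrite big1_seq ?addr0 // => a /andP[_ ha]; apply: u0.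
Qed.

Lemma dep_fin (P : V -> Prop) (sp : seq V) :
  (forall v, P v -> exists c : 'I_(size sp) -> C, v = \sum_(i < size sp) c i *: sp`_i) ->
  forall f : 'I_(size sp).+1 -> V, (forall i, P (f i)) ->
  exists a : 'I_(size sp).+1 -> C, (exists i, a i != 0) /\ \sum_i a i *: f i = 0.
Proof.
move=> Hsp f Pf.
have [c Hc] := fin_all_exists (fun i => Hsp _ (Pf i)).
pose M := \matrix_(i < (size sp).+1, j < size sp) c i j.
have nf : ~~ row_free M.
  rewrite /row_free; apply/negP => /eqP E.
  by have := rank_leq_col M; rewrite E ltnn.
rewrite -kermx_eq0 in nf.
case: (pickP [pred ij : 'I_(size sp).+1 * 'I_(size sp).+1 | kermx M ij.1 ij.2 != 0]) =>
  [[i j] /= Hij | H0]; last first.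
  case/negP: nf; apply/eqP/matrixP => i j.
  by have /negbFE/eqP -> := H0 (i, j); rewrite mxE.
exists (fun k => kermx M i k); split; first by exists j.
have K0 := mulmx_ker M.
under eq_bigr => k _ do rewrite Hc scaler_sumr.
rewrite exchange_big /= big1 // => l _.
under eq_bigr => k _ do rewrite scalerA.
rewrite -scaler_suml.
have E : (kermx M *m M) i l = 0 by rewrite K0 mxE.
move: E; rewrite {1}mxE => E.
suff -> : \sum_(k < (size sp).+1) kermx M i k * c k l = 0 by rewrite scale0r.
by rewrite -[RHS]E; apply: eq_bigr => k _; rewrite [M _ _]mxE.
Qed.

Implicit Types (p q : {poly C}) (v : V).
Definition Pv (E : {linear V -> V}) (q : {poly C}) (v : V) :=
  \sum_(i < size q) q`_i *: iter i E v.

Lemma PvE E q v B : (size q <= B)%N -> Pv E q v = \sum_(i < B) q`_i *: iter i E v.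
Proof.
move=> sB; rewrite /Pv (big_ord_widen B (fun i => q`_i *: iter i E v) sB) big_mkcond.
apply: eq_bigr => i _; case: ifP => // /negbT; rewrite -leqNgt => le.
by rewrite nth_default ?scale0r.
Qed.

Lemma PvD E p q v : Pv E (p + q) v = Pv E p v + Pv E q v.
Proof.
pose B := maxn (size p) (size q).
rewrite !(PvE _ _ (B := B)) ?leq_maxl ?leq_maxr ?(leq_trans (size_polyD _ _)) //.
by rewrite -big_split; apply: eq_bigr => i _; rewrite coefD scalerDl.
Qed.

Lemma PvZ E (c : C) q v : Pv E (c *: q) v = c *: Pv E q v.
Proof.
rewrite !(PvE _ _ (B := size q)) ?size_scale_leq // scaler_sumr.
by apply: eq_bigr => i _; rewrite coefZ scalerA.
Qed.

Lemma PvX E q v : Pv E (q * 'X) v = E (Pv E q v).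
Proof.
rewrite (PvE _ _ (B := (size q).+1)); last first.
  by rewrite (leq_trans (size_polyMleq _ _)) // size_polyX addn2.
rewrite big_ord_recl coefMX eqxx scale0r add0r /Pv linear_sum.
by apply: eq_bigr => i _; rewrite coefMX /= linearZ.
Qed.

Lemma PvXr E q (r : C) v : Pv E (q * ('X - r%:P)) v = E (Pv E q v) - r *: Pv E q v.
Proof.
by rewrite mulrBr PvD PvX mulrC mul_polyC -scaleNr PvZ scaleNr.
Qed.

Lemma eigvec (W : V -> Prop) (E : {linear V -> V}) (sp : seq V) u :
  W 0 -> (forall x y, W x -> W y -> W (x + y)) -> (forall (a : C) x, W x -> W (a *: x)) ->
  (forall x, W x -> W (E x)) ->
  (forall v, W v -> exists c : 'I_(size sp) -> C, v = \sum_(i < size sp) c i *: sp`_i) ->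
  W u -> u != 0 -> exists w t, [/\ W w, w != 0 & E w = t *: w].
Proof.
move=> W0 WD WZ WE Wsp Wu u0.
have Wit : forall i x, W x -> W (iter i E x) by move=> i x Wx; elim: i => //= i /WE.
have WPv : forall q, W (Pv E q u).
  move=> q; rewrite /Pv; apply: (big_ind W) => // i _; exact/WZ/Wit.
have [a [[i0 ai0] Sa]] := dep_fin Wsp (f := fun i => iter i E u) (fun i => Wit _ _ Wu).
pose q := \poly_(i < (size sp).+1) a (inord i).
have q0 : q != 0.
  apply/eqP => /(congr1 (fun p : {poly C} => p`_i0)); rewrite coef_poly ltn_ord coef0 inord_val.
  by move/eqP; rewrite (negbTE ai0).
have Pq : Pv E q u = 0.
  rewrite (PvE _ _ (B := (size sp).+1)) ?size_poly // -[RHS]Sa.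
  by apply: eq_bigr => i _; rewrite coef_poly ltn_ord inord_val.
suff H : forall k p, (size p <= k)%N -> p != 0 -> Pv E p u = 0 ->
    exists w t, [/\ W w, w != 0 & E w = t *: w] by exact: (H _ q (leqnn _)).
elim=> [|k IH] p.
  by rewrite leqn0 size_poly_eq0 => /eqP -> /eqP.
move=> sp1 p0 Pp.
case: (eqVneq (size p) 1) => [s1 | s1].
  move: Pp; rewrite /Pv s1 big_ord1 /= => /eqP; rewrite scaler_eq0 (negbTE u0) orbF.
  by move: p0; rewrite -lead_coef_eq0 lead_coefE s1 => /negbTE ->.
have [r rr] := closed_rootP p s1.
have [p' Ep] := factor_theorem p r rr.
have p'0 : p' != 0 by apply: contraNneq p0 => e; rewrite Ep e mul0r.
have sp' : (size p' <= k)%N.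
  move: sp1; rewrite Ep size_mul // ?polyXsubC_eq0 // size_XsubC addn2 /=.
  by [].
move: Pp; rewrite Ep PvXr => /eqP; rewrite subr_eq0 => /eqP Ew.
case: (eqVneq (Pv E p' u) 0) => [P0 | P0]; first exact: (IH p').
by exists (Pv E p' u), r.
Qed.

Lemma span_conv (e : int -> V) (l : seq (C * int)) :
  exists (s : seq int) (c : int -> C), uniq s /\
    \sum_(x <- l) x.1 *: e x.2 = \sum_(i <- s) c i *: e i.
Proof.
elim: l => [|[al i] l [s [c [us IH]]]].
  by exists [::], (fun _ => 0); rewrite !big_nil.
rewrite big_cons IH /=.
case: (boolP (i \in s)) => iin.
  exists s, (fun j => if j == i then c i + al else c j); split => //.
  rewrite (bigD1_seq i) //= (bigD1_seq i iin us) /= eqxx addrA addrC -scalerDl addrC [al + _]addrC.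
  by congr (_ + _); apply: eq_bigr => j /negbTE ->.
exists (i :: s), (fun j => if j == i then al else c j); split; first by rewrite /= iin.
rewrite big_cons eqxx; congr (_ + _); apply: eq_big_seq => j js.
by case: eqP js => // ->; rewrite (negbTE iin).
Qed.

End Gen2.

Section Main.
Variables (C : numClosedFieldType) (V : lmodType C) (n : nat).
Variables (h z : {linear V -> V}) (p : nat -> {linear V -> V}) (zd lam : C).
Hypothesis rep : is_rep n h z p.
Hypothesis simp : simple_module n h z p.
Hypothesis wmod : weight_module h.
Hypothesis zact : forall v, z v = zd *: v.
Hypothesis zd0 : zd != 0.

Local Notation N := n.*2.+1.

Definition coef (k : nat) : C := (-1) ^+ (k + n + 1) * ((k`! * (N - k)`!)%N)%:R * zd.

Lemma coef_neq0 k : coef k != 0.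
Proof.
rewrite /coef !mulf_neq0 ?signr_eq0 // pnatr_eq0 muln_eq0 negb_or -!lt0n !fact_gt0.
by []. Qed.

Lemma pcomm k : (k <= N)%N -> forall v, p k (p (N - k) v) - p (N - k) (p k v) = coef k *: v.
Proof.
move=> kN v; case: rep => R1 _ _ _.
by rewrite R1 ?leq_subr // subnKC // eqxx zact scalerA.
Qed.

Lemma pcomm0 j k : (j <= N)%N -> (k <= N)%N -> (j + k != N)%N ->
  forall v, p j (p k v) = p k (p j v).
Proof.
move=> jN kN jk v; case: rep => R1 _ _ _.
by apply/eqP; rewrite -subr_eq0 R1 // (negbTE jk) scale0r.
Qed.

Definition dd (k : nat) : C := N%:R - (k.*2)%:R.

Lemma hcomm k : (k <= N)%N -> forall v, h (p k v) - p k (h v) = dd k *: p k v.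
Proof. by move=> kN v; case: rep => _ R2 _ _; rewrite R2. Qed.

Lemma ddN k : (k <= N)%N -> dd (N - k) = - dd k.
Proof.
move=> kN; rewrite /dd -!muln2 mulnBl natrB; last by rewrite leq_mul2r; lia.
by rewrite !natrM; ring.
Qed.

Lemma dd_nat k : (k <= n)%N -> dd k = (N - k.*2)%N%:R.
Proof. by move=> kn; rewrite /dd natrB //; lia. Qed.

Definition wt (mu : C) (v : V) := h v = mu *: v.

Lemma wt_p k mu v : (k <= N)%N -> wt mu v -> wt (mu + dd k) (p k v).
Proof.
move=> kN; rewrite /wt => Hv; have := hcomm kN v; rewrite Hv linearZ => /eqP.
rewrite /= subr_eq => /eqP ->; by rewrite -scalerDl addrC.
Qed.

Lemma wt_iter k mu v m : (k <= N)%N -> wt mu v -> wt (mu + m%:R * dd k) (iter m (p k) v).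
Proof. by move=> kN Hv; apply: iter_wt => //; apply: hcomm. Qed.


Lemma iter_hc (H f : {linear V -> V}) (d : C) m v :
  (forall v, H (f v) - f (H v) = d *: f v) ->
  H (iter m f v) = iter m f (H v) + (m%:R * d) *: iter m f v.
Proof.
move=> Hf; elim: m => [|m IH] /=; first by rewrite mul0r scale0r addr0.
have := Hf (iter m f v); move/eqP; rewrite subr_eq => /eqP ->.
rewrite IH linearD linearZ /= addrCA -scalerDl; congr (_ + _ *: _).
by rewrite mulrSr mulrDl mul1r addrC.
Qed.

Lemma iter_heis (A B : {linear V -> V}) (c : C) m v :
  (forall v, A (B v) - B (A v) = c *: v) ->
  iter m.+1 A (B v) = B (iter m.+1 A v) + (m.+1%:R * c) *: iter m A v.
Proof.
move=> AB; elim: m => [|m IH].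
  by rewrite /= mul1r -(AB v) addrC subrK.
rewrite (iterS m.+1) IH linearD linearZ /=.
move/eqP: (AB (iter m.+1 A v)); rewrite subr_eq => /eqP ->.
rewrite /= addrAC addrC -scalerDl; congr (_ + _ *: _).
by rewrite [m.+2%:R]mulrSr mulrDl mul1r addrC.
Qed.

Definition injp k := forall v, p k v = 0 -> v = 0.
Definition LNp k := forall v, exists m, iter m (p k) v = 0.

Lemma LN_submod i : (i <= N)%N -> submodule n h z p (fun v => exists m, iter m (p i) v = 0).
Proof.
move=> iN; split.
- by exists 0%N.
- move=> u v [m1 H1] [m2 H2]; exists (m1 + m2)%N; rewrite iter_linD.
  rewrite {1}addnC !iterD H1 H2 !iter_lin0 addr0 //.
- by move=> a v [m Hm]; exists m; rewrite iter_linZ Hm scaler0.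
split.
- move=> v [m Hm]; exists m.
  have := iter_hc m v (hcomm iN); rewrite Hm linear0 scaler0 addr0 => <-.
  by [].
- by move=> v [m Hm]; exists m; rewrite zact iter_linZ Hm scaler0.
- move=> l lN v [m Hm]; case: (eqVneq (i + l)%N N) => il.
  + have el : l = (N - i)%N by rewrite -il addKn.
    exists m.+1; rewrite el (iter_heis _ _ (pcomm iN)).
    by rewrite iterS Hm !linear0 addr0.
  + have li : (l + i != N)%N by rewrite addnC.
    exists m; rewrite -(iter_comm _ _ (pcomm0 lN iN li)) Hm.
    by rewrite linear0.
Qed.

Lemma inj_or_LN i : (i <= N)%N -> injp i \/ LNp i.
Proof.
move=> iN; case: (classic (injp i)) => [|ni]; first by left.
right; case: simp => _ /(_ _ (LN_submod iN)) [H0|//].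
case: ni => v pv; apply: (H0 v); by exists 1%N.
Qed.

Lemma LN_inj i : (i <= N)%N -> LNp i -> injp (N - i).
Proof.
move=> iN LN u Bu; have [m Hm] := LN u.
elim: m Hm => // m IH Hm; apply: IH.
have := iter_heis m u (pcomm iN); rewrite Bu iter_lin0 Hm linear0 add0r.
move/esym/eqP; rewrite scaler_eq0 mulf_eq0 pnatr_eq0 (negbTE (coef_neq0 i)) /=.
by move/eqP.
Qed.

Lemma pair_inj k : (k <= n)%N -> injp k \/ injp (N - k).
Proof.
move=> kn; have kN : (k <= N)%N by lia.
case: (inj_or_LN kN) => [|/(LN_inj kN)]; [left|right] => //.
Qed.


Lemma exists_wvec : exists w mu, w != 0 /\ wt mu w.
Proof.
case: simp => [[v v0] _]; have [s [Hs Ev]] := wmod v.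
case: (boolP (has (fun x : C * V => x.2 != 0) s)) => [/hasP[x xs nz] | /hasPn H].
  by exists x.2, x.1; split => //; apply: Hs.
case/eqP: v0; rewrite Ev big1_seq // => x /andP[_ xs].
by have := H x xs; rewrite negbK => /eqP.
Qed.

Lemma last_nz (g : {linear V -> V}) x M : x != 0 -> iter M g x = 0 ->
  exists m, iter m g x != 0 /\ g (iter m g x) = 0.
Proof.
move=> x0; elim: M => [|M IH] /=; first by move=> e; rewrite e eqxx in x0.
case: (eqVneq (iter M g x) 0) => [e _|ne e]; first exact: IH.
by exists M.
Qed.

Lemma common_kernel (f : nat -> nat) :
  (forall k, (k <= n)%N -> (f k <= N)%N) ->
  (forall j k, (j <= n)%N -> (k <= n)%N -> (f j + f k != N)%N) ->
  (forall k, (k <= n)%N -> LNp (f k)) ->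
  exists w mu, [/\ w != 0, wt mu w & forall k, (k <= n)%N -> p (f k) w = 0].
Proof.
move=> fN fc fLN.
suff H : forall j, (j <= n.+1)%N -> exists w mu,
    [/\ w != 0, wt mu w & forall k, (k < j)%N -> p (f k) w = 0].
  have [w [mu [w0 wm Hk]]] := H _ (leqnn _).
  by exists w, mu; split => // k kn; apply: Hk.
elim=> [_|j IH jn].
  by have [w [mu [w0 wm]]] := exists_wvec; exists w, mu; split.
have [w [mu [w0 wm Hk]]] := IH (ltnW jn).
have [M HM] := fLN j jn w.
have [m [nz ker]] := last_nz w0 HM.
exists (iter m (p (f j)) w), (mu + m%:R * dd (f j)); split => //.
  exact: wt_iter (fN _ jn) wm.
move=> k; rewrite ltnS leq_eqVlt => /orP[/eqP -> //|kj].
have kn : (k <= n)%N by lia.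
rewrite (iter_comm _ _ (pcomm0 (fN _ kn) (fN _ jn) (fc _ _ kn jn))) Hk //.
exact: iter_lin0.
Qed.

Lemma gen_nz v : v != 0 -> generated_by n h z p v.
Proof.
move=> v0 P sP Pv w; case: simp => _ /(_ P sP) [H0|//].
by case/eqP: v0; apply: H0.
Qed.

Lemma highest_of : (forall k, (k <= n)%N -> LNp k) -> highest_weight_module n h z p.
Proof.
move=> H.
have f1 : forall k, (k <= n)%N -> (id k <= N)%N by move=> k kn /=; lia.
have f2 : forall j k, (j <= n)%N -> (k <= n)%N -> (id j + id k != N)%N.
  by move=> j k jn kn /=; lia.
have [w [mu [w0 wm Hk]]] := common_kernel f1 f2 H.
by exists w, mu; split => //; apply: gen_nz.
Qed.

Lemma lowest_of : (forall k, (k <= n)%N -> LNp (N - k)) -> lowest_weight_module n h z p.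
Proof.
move=> H.
have f1 : forall k, (k <= n)%N -> ((fun k => N - k)%N k <= N)%N by move=> k kn /=; lia.
have f2 : forall j k, (j <= n)%N -> (k <= n)%N ->
    ((fun k => N - k)%N j + (fun k => N - k)%N k != N)%N.
  by move=> j k jn kn /=; lia.
have [w [mu [w0 wm Hk]]] := common_kernel f1 f2 H.
exists w, mu; split => //; last by apply: gen_nz.
move=> k /andP[nk kN]; have := Hk (N - k)%N; rewrite /= subKn //; apply; lia.
Qed.


Lemma dd_n : dd n = 1.
Proof. by rewrite dd_nat // (_ : (N - n.*2)%N = 1%N) //; lia. Qed.

Lemma reach_gen i j (Dx Dy r s : nat) w mu :
  (i <= N)%N -> (j <= N)%N -> injp i -> injp j ->
  dd i = Dx%:R -> dd j = - Dy%:R -> w != 0 -> wt mu w ->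
  mu + (r * Dx)%N%:R - (s * Dy)%N%:R = lam -> exists u, u != 0 /\ wt lam u.
Proof.
move=> iN jN ii ij di dj w0 wm E.
exists (iter r (p i) (iter s (p j) w)); split.
  apply/eqP => /(iter_inj ii) /(iter_inj ij) /eqP; exact/negP.
have := wt_iter r iN (wt_iter s jN wm); rewrite di dj -E.
by rewrite !natrM mulrN addrAC.
Qed.

Lemma reach w mu (m : int) : w != 0 -> wt mu w -> mu = lam + m%:~R ->
  (injp n /\ exists i, (i <= n)%N /\ injp (N - i)) \/
  (injp (N - n) /\ exists j, (j <= n)%N /\ injp j) ->
  exists u, u != 0 /\ wt lam u.
Proof.
move=> w0 wm Em [[In [i [iin Ii]]] | [In [j [jn Ij]]]].
- pose D := (N - i.*2)%N; pose s := `|m|%N; pose r := `|(s * D)%:Z - m|%N.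
  have D0 : (0 < D)%N by rewrite /D; lia.
  have Er : Posz r = (s * D)%:Z - m by rewrite /r /s; nia.
  apply: (reach_gen (Dx := 1) (Dy := D) (r := r) (s := s) _ _ In Ii _ _ w0 wm).
  + lia.
  + lia.
  + exact: dd_n.
  + by rewrite ddN ?dd_nat //; lia.
  + have Er' := congr1 (fun x : int => x%:~R : C) Er; rewrite /= intrB in Er'.
    rewrite muln1 (_ : r%:R = (Posz r)%:~R) // Er' Em.
    by rewrite -[((s * D)%:Z)%:~R]/((s*D)%:R : C); ring.
- pose D := (N - j.*2)%N; pose r := `|m|%N; pose s := `|((r * D)%:Z + m)%R|%N.
  have D0 : (0 < D)%N by rewrite /D; lia.
  have Es : Posz s = (r * D)%:Z + m by rewrite /r /s; nia.
  apply: (reach_gen (Dx := D) (Dy := 1) (r := r) (s := s) _ _ Ij In _ _ w0 wm).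
  + lia.
  + lia.
  + by rewrite dd_nat.
  + by rewrite ddN ?dd_n //; lia.
  + have Es' := congr1 (fun x : int => x%:~R : C) Es; rewrite /= intrD in Es'.
    rewrite muln1 (_ : s%:R = (Posz s)%:~R) // Es' Em.
    by rewrite -[((r * D)%:Z)%:~R]/((r*D)%:R : C); ring.
Qed.


Lemma no_dense k k' u : fin_dim (weight_space h lam) ->
  u != 0 -> wt lam u -> (k <= n)%N -> (k' <= n)%N -> k != k' ->
  injp k -> injp (N - k') -> False.
Proof.
move=> [sp Hsp] u0 wu kn kn' kk' Ik Ik'.
have kN : (k <= N)%N by lia.
have kN' : (k' <= N)%N by lia.
have kN2 : (N - k <= N)%N by lia.
have kN2' : (N - k' <= N)%N by lia.
pose D := (N - k.*2)%N; pose D' := (N - k'.*2)%N.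
pose A := p k; pose Bk := p (N - k); pose Y := p (N - k').
pose E : {linear V -> V} := A \o Bk.
have AY : forall v, A (Y v) = Y (A v) by apply: pcomm0 => //; lia.
have BY : forall v, Bk (Y v) = Y (Bk v) by apply: pcomm0 => //; lia.
have EY : forall v, E (Y v) = Y (E v) by move=> v; rewrite /= BY AY.
have ddk : dd k = D%:R by rewrite dd_nat.
have ddk' : dd (N - k') = - D'%:R by rewrite ddN // dd_nat.
pose Tf v := iter D' A (iter D Y v).
have WT : forall v, wt lam v -> wt lam (Tf v).
  move=> v wv; have := wt_iter D' kN (wt_iter D kN2' wv); rewrite ddk ddk'.
  by rewrite mulrN [D'%:R * _]mulrC subrK.
have WE : forall v, wt lam v -> wt lam (E v).
  move=> v wv; have := wt_p kN (wt_p kN2 wv); rewrite ddN // subrK.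
  by [].
have [w [t [Ww w0 Ew]]] : exists w t, [/\ wt lam w, w != 0 & E w = t *: w].
  apply: (eigvec (sp := sp) (u := u)) => //.
  - by rewrite /wt linear0 scaler0.
  - by move=> x y; rewrite /wt linearD => -> ->; rewrite scalerDr.
  - by move=> a x; rewrite /wt linearZ => ->; rewrite /= scalerA mulrC -scalerA.
pose s0 := D'%:R * coef k.
have s00 : s0 != 0.
  by rewrite mulf_neq0 ?coef_neq0 // pnatr_eq0 /D'; lia.
have ET : forall v (t' : C), E v = t' *: v -> E (Tf v) = (t' - s0) *: Tf v.
  move=> v t' Ev.
  have E1 : A (Bk (iter D Y v)) = t' *: iter D Y v.
    by rewrite -[A (Bk _)]/(E _) (iter_comm _ _ EY) Ev iter_linZ.
  by have := heisB D' (pcomm kN) E1.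
pose g i := iter i Tf w.
have Wg : forall i, wt lam (g i) by elim=> //= i IH; apply: WT.
have Eg : forall i : nat, E (g i) = (t - i%:R * s0) *: g i.
  elim=> [|i IH]; first by rewrite mul0r subr0.
  by rewrite /g iterS (ET _ _ IH) -addrA -opprD mulrSr mulrDl mul1r.
have g0 : forall i, g i != 0.
  elim=> //= i IH; apply/eqP => /(iter_inj Ik) /(iter_inj Ik') /eqP.
  exact/negP.
have [al [[i0 al0] Sal]] := dep_fin Hsp (f := fun i => g i) (fun i => Wg i).
have evi : {in index_enum 'I_(size sp).+1 &, injective (fun i : 'I_(size sp).+1 => t - i%:R * s0)}.
  move=> a b _ _ /= /addrI /oppr_inj /(mulIf s00) /eqP; rewrite eqr_nat => /eqP.
  exact: val_inj.
have evE : forall i : 'I_(size sp).+1, i \in index_enum _ ->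
    E (al i *: g i) = (t - i%:R * s0) *: (al i *: g i).
  by move=> i _; rewrite linearZ Eg /= !scalerA mulrC.
have := eig_indep (index_enum_uniq _) evi evE Sal (mem_index_enum i0).
by move/eqP; rewrite scaler_eq0 (negbTE al0) (negbTE (g0 _)).
Qed.


Lemma notLN_ex (f : nat -> nat) : ~ (forall k, (k <= n)%N -> LNp (f k)) ->
  (forall k, (k <= n)%N -> (f k <= N)%N) ->
  exists k, (k <= n)%N /\ injp (f k).
Proof.
move=> H fN; have [k Hk] := not_all_ex_not _ _ H.
have [kn nLN] := imply_to_and _ _ Hk.
exists k; split => //; case: (inj_or_LN (fN _ kn)) => //.
Qed.

Lemma start_lam :
  (forall mu, in_supp h mu -> exists m : int, mu = lam + m%:~R) ->
  (exists j, (j <= n)%N /\ injp j) -> (exists i, (i <= n)%N /\ injp (N - i)) ->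
  exists u, u != 0 /\ wt lam u.
Proof.
move=> hs [j [jn Ij]] [i [iin Ii]].
have [w [mu [w0 wm]]] := exists_wvec.
have [m Em] := hs mu (ex_intro _ w (conj w0 wm)).
apply: (reach w0 wm Em).
case: (pair_inj (leqnn n)) => In; [left|right]; split => //.
- by exists i.
- by exists j.
Qed.

Lemma case_pos : (0 < n)%N ->
  (forall mu, in_supp h mu -> exists m : int, mu = lam + m%:~R) ->
  fin_dim (weight_space h lam) ->
  highest_weight_module n h z p \/ lowest_weight_module n h z p.
Proof.
move=> n0 hs hf.
case: (classic (forall k, (k <= n)%N -> LNp k)) => [H|H1]; first by left; apply: highest_of.
case: (classic (forall k, (k <= n)%N -> LNp (N - k))) => [H|H2]; first by right; apply: lowest_of.
have fN1 : forall k, (k <= n)%N -> (id k <= N)%N by move=> k kn /=; lia.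
have [j [jn Ij]] := notLN_ex H1 fN1.
have [i [iin Ii]] := notLN_ex (f := fun k => N - k)%N H2 (fun k kn => leq_subr _ _).
have [u [u0 wu]] := start_lam hs (ex_intro _ j (conj jn Ij)) (ex_intro _ i (conj iin Ii)).
exfalso.
case: (eqVneq j i) => [eji|nji]; last exact: (no_dense hf u0 wu jn iin nji Ij Ii).
pose l := if j == 0%N then n else 0%N.
have ln : (l <= n)%N by rewrite /l; case: ifP => //.
have lj : l != j.
  rewrite /l; case: (eqVneq j 0%N) => [->|nj] /=; first by rewrite -lt0n.
  by rewrite eq_sym.
case: (pair_inj ln) => Il.
- by apply: (no_dense hf u0 wu ln iin _ Il Ii); rewrite -eji.
- by apply: (no_dense hf u0 wu jn ln _ Ij Il); rewrite eq_sym.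
Qed.


Fixpoint gseq (a : C) (w : V) (j : nat) : V :=
  match j with
  | 0%N => w
  | j'.+1 => (- (zd * (a - j'%:R)))^-1 *: p 0 (gseq a w j')
  end.

Definition eD (a : C) (w : V) (i : int) : V :=
  match i with
  | Posz k => iter k (p 1) w
  | Negz j => gseq a w j.+1
  end.

Section Zero.
Hypothesis n0 : n = 0%N.

Lemma N1 : N = 1%N. Proof. by rewrite n0. Qed.

Lemma coef00 : coef 0 = - zd.
Proof. by rewrite /coef n0 (_ : (0 + 0 + 1)%N = 1%N) // (_ : (0`! * _)%N = 1%N) // expr1 !mulN1r. Qed.
Lemma comm01 v : p 0 (p 1 v) - p 1 (p 0 v) = - zd *: v.
Proof. by have := pcomm (leq0n N) v; rewrite subn0 N1 coef00. Qed.

Lemma dd0 : dd 0 = 1. Proof. by have := dd_n; rewrite n0. Qed.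
Lemma dd1 : dd 1 = -1.
Proof. by have := ddN (leq0n N); rewrite subn0 N1 dd0. Qed.

Variables (w : V) (t a : C).
Hypotheses (I0 : injp 0) (I1 : injp 1) (w0 : w != 0) (ww : wt lam w)
  (Ew : p 0 (p 1 w) = t *: w) (ta : t = - (zd * (a + 1))).

Lemma p0N : (0 <= N)%N. Proof. by []. Qed.
Lemma p1N : (1 <= N)%N. Proof. by rewrite N1. Qed.

Lemma gprop j : [/\ gseq a w j != 0, p 0 (p 1 (gseq a w j)) = (t + j%:R * zd) *: gseq a w j,
  wt (lam + j%:R) (gseq a w j) & a - j%:R != 0].
Proof.
have P10 : forall v, p 1 (p 0 v) = p 0 (p 1 v) + zd *: v.
  by move=> v; rewrite -(subrK (p 1 (p 0 v)) (p 0 (p 1 v))) comm01 scaleNr addrC addNKr.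
elim: j => [|j [g0 Eg wg aj0]].
  have E1 := P10 w; rewrite Ew -scalerDl in E1.
  split => //; [by rewrite mul0r addr0 | by rewrite addr0 |].
  rewrite subr0; apply/eqP => a0; move: E1.
  rewrite ta a0 add0r mulr1 addNr scale0r => /I1 /I0 /eqP; exact/negP.
have E1 : p 1 (p 0 (gseq a w j)) = (- (zd * (a - j%:R))) *: gseq a w j.
  by rewrite P10 Eg -scalerDl ta; congr (_ *: _); ring.
have c0 : - (zd * (a - j%:R)) != 0.
  apply/eqP => c0; move: E1; rewrite c0 scale0r => /I1 /I0 /eqP; exact/negP.
have aj : a - j%:R != 0 by apply: contraNneq c0 => ->; rewrite mulr0 oppr0.
have g1 : gseq a w j.+1 != 0.
  by rewrite /= scaler_eq0 invr_eq0 negb_or c0 /=; apply/eqP => /I0 /eqP; exact/negP.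
have Eg1 : p 0 (p 1 (gseq a w j.+1)) = (t + j.+1%:R * zd) *: gseq a w j.+1.
  rewrite [gseq _ _ j.+1]/= [p 1 _]linearZ /= E1 !linearZ /= !scalerA.
  by congr (_ *: _); rewrite ta -natr1; ring.
split => //.
- have := wt_p p0N wg; rewrite dd0 -natr1 /wt => Hw.
  by rewrite /= linearZ /= Hw !scalerA mulrC addrA.
- apply/eqP => e; move/eqP: e; rewrite subr_eq0 => /eqP ae.
  have := P10 (gseq a w j.+1); rewrite Eg1 -scalerDl.
  rewrite (_ : t + j.+1%:R * zd + zd = 0); last by rewrite ta ae -natr1; ring.
  by rewrite scale0r => /I1 /I0 /eqP; apply/negP.
Qed.

Lemma P10 v : p 1 (p 0 v) = p 0 (p 1 v) + zd *: v.
Proof. by rewrite -(subrK (p 1 (p 0 v)) (p 0 (p 1 v))) comm01 scaleNr addrC addNKr. Qed.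

Lemma fprop k : [/\ iter k (p 1) w != 0,
  p 0 (p 1 (iter k (p 1) w)) = (t - k%:R * zd) *: iter k (p 1) w,
  wt (lam - k%:R) (iter k (p 1) w) & a + k.+1%:R != 0].
Proof.
have f0 : iter k (p 1) w != 0 by apply/eqP => /(iter_inj I1) /eqP; apply/negP.
have Ef : p 0 (p 1 (iter k (p 1) w)) = (t - k%:R * zd) *: iter k (p 1) w.
  by rewrite (heisA k comm01 Ew) mulrN.
split => //.
- by have := wt_iter k p1N ww; rewrite dd1 mulrN1.
- apply/eqP => e; move: Ef.
  have c0 : t - k%:R * zd = - (zd * (a + k.+1%:R)) by rewrite ta -natr1; ring.
  rewrite c0 e mulr0 oppr0.
  by rewrite scale0r => /I0 /I1 /eqP; apply/negP.
Qed.

Lemma eD_Negz1 j : eD a w (Negz j + 1) = gseq a w j.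
Proof.
case: j => [|j]; first by rewrite (_ : Negz 0 + 1 = 0).
by rewrite (_ : Negz j.+1 + 1 = Negz j) //; rewrite !NegzE; lia.
Qed.

Lemma eD_nz i : eD a w i != 0.
Proof. by case: i => [k|j] /=; [case: (fprop k) | case: (gprop j.+1)]. Qed.

Lemma eD_rel i : [/\ p 1 (eD a w i) = eD a w (i + 1),
  p 0 (eD a w i) = (- (zd * (a + i%:~R))) *: eD a w (i - 1),
  z (eD a w i) = zd *: eD a w i & h (eD a w i) = (lam - i%:~R) *: eD a w i].
Proof.
split; last 2 first.
- by rewrite zact.
- case: i => [k|j] /=; first by case: (fprop k).
  case: (gprop j.+1) => _ _ Hw _; rewrite Hw NegzE intrN opprK.
  by rewrite -[((j.+1)%:Z)%:~R]/(j.+1%:R : C).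
- case: i => [k|j].
    by rewrite (_ : Posz k + 1 = Posz k.+1) //; lia.
  rewrite eD_Negz1 /= linearZ /= P10.
  case: (gprop j) => _ Eg _ aj; rewrite Eg -scalerDl scalerA.
  rewrite (_ : t + j%:R * zd + zd = - (zd * (a - j%:R))); last by rewrite ta; ring.
  by rewrite mulVf ?scale1r // oppr_eq0 mulf_neq0.
- case: i => [[|k]|j].
  + rewrite (_ : Posz 0 - 1 = Negz 0) //= linearZ /= scalerA.
    case: (gprop 0) => _ _ _ a0; rewrite subr0 (_ : (0%Z)%:~R = 0 :> C) // addr0 mulVf ?scale1r //.
    by rewrite oppr_eq0 mulf_neq0 //; move: a0; rewrite subr0.
  + rewrite (_ : Posz k.+1 - 1 = Posz k); last by lia.
    case: (fprop k) => _ Ef _ _; rewrite /= Ef; congr (_ *: _).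
    by rewrite -[((k.+1)%:Z)%:~R]/(k.+1%:R : C) ta -natr1; ring.
  + rewrite (_ : Negz j - 1 = Negz j.+1); last by rewrite !NegzE; lia.
    rewrite /= [p 0 (_ *: _)]linearZ /= scalerA NegzE intrN.
    rewrite -[((j.+1)%:Z)%:~R]/(j.+1%:R : C) mulfV ?scale1r //.
    case: (gprop j.+1) => _ _ _ aj; by rewrite oppr_eq0 mulf_neq0.
Qed.

Lemma eD_basis : is_basis_Z (eD a w).
Proof.
split.
  move=> s c us S0 i iin.
  have evi : {in s &, injective (fun i : int => lam - i%:~R : C)}.
    by move=> x y _ _ /= /addrI /oppr_inj /intr_inj.
  have evE : forall i, i \in s -> h (c i *: eD a w i) = (lam - i%:~R) *: (c i *: eD a w i).
    by move=> j _; rewrite linearZ /=; case: (eD_rel j) => _ _ _ ->; rewrite !scalerA mulrC.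
  have := eig_indep us evi evE S0 iin.
  by move/eqP; rewrite scaler_eq0 (negbTE (eD_nz i)) orbF => /eqP.
pose Sp v := exists l : seq (C * int), v = \sum_(x <- l) x.1 *: eD a w x.2.
suff H : forall v, Sp v.
  move=> v; have [l ->] := H v; have [s' [c [_ E]]] := span_conv (eD a w) l.
  by exists s', c.
have sub : submodule n h z p Sp.
  split.
  - by exists [::]; rewrite big_nil.
  - by move=> u v [l1 ->] [l2 ->]; exists (l1 ++ l2); rewrite big_cat.
  - move=> c v [l ->]; exists [seq (c * x.1, x.2) | x <- l].
    by rewrite big_map scaler_sumr; apply: eq_bigr => x _; rewrite scalerA.
  split.
  - move=> v [l ->]; exists [seq (x.1 * (lam - x.2%:~R), x.2) | x <- l].
    rewrite big_map linear_sum; apply: eq_bigr => x _.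
    by rewrite linearZ /=; case: (eD_rel x.2) => _ _ _ ->; rewrite scalerA.
  - move=> v [l ->]; exists [seq (x.1 * zd, x.2) | x <- l].
    rewrite big_map linear_sum; apply: eq_bigr => x _.
    by rewrite linearZ /=; case: (eD_rel x.2) => _ _ -> _; rewrite scalerA.
  - move=> k; rewrite N1 => kN v [l ->].
    have [->|->] : k = 0%N \/ k = 1%N by lia.
    + exists [seq (x.1 * - (zd * (a + x.2%:~R)), x.2 - 1) | x <- l].
      rewrite big_map linear_sum; apply: eq_bigr => x _.
      by rewrite linearZ /=; case: (eD_rel x.2) => _ -> _ _; rewrite scalerA.
    + exists [seq (x.1, x.2 + 1) | x <- l].
      rewrite big_map linear_sum; apply: eq_bigr => x _.
      by rewrite linearZ /=; case: (eD_rel x.2) => -> _ _ _.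
case: simp => _ /(_ Sp sub) [H0|//].
have : Sp w by exists [:: (1, 0%Z)]; rewrite big_seq1 scale1r.
by move/H0 => /eqP; rewrite (negbTE w0).
Qed.

End Zero.

Lemma case_zero : n = 0%N ->
  (forall mu, in_supp h mu -> exists m : int, mu = lam + m%:~R) ->
  fin_dim (weight_space h lam) ->
  highest_weight_module n h z p \/ lowest_weight_module n h z p \/
  exists a mu : C, (forall m : int, a != m%:~R) /\ iso_D h z p a zd mu.
Proof.
move=> n0 hs [sp hsp].
case: (classic (forall k, (k <= n)%N -> LNp k)) => [H|H1]; first by left; apply: highest_of.
case: (classic (forall k, (k <= n)%N -> LNp (N - k))) => [H|H2].
  by right; left; apply: lowest_of.
right; right.
have fN1 : forall k, (k <= n)%N -> (id k <= N)%N by move=> k kn /=; lia.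
have [j [jn Ij]] := notLN_ex H1 fN1.
have [i [iin Ii]] := notLN_ex (f := fun k => N - k)%N H2 (fun k kn => leq_subr _ _).
have [u [u0 wu]] := start_lam hs (ex_intro _ j (conj jn Ij)) (ex_intro _ i (conj iin Ii)).
have I0 : injp 0 by move: jn Ij; rewrite n0 leqn0 => /eqP ->.
have I1 : injp 1 by move: iin Ii; rewrite n0 leqn0 => /eqP ->.
pose E : {linear V -> V} := p 0 \o p 1.
have [w [t [Ww w0 Ew]]] : exists w t, [/\ wt lam w, w != 0 & E w = t *: w].
  apply: (eigvec (sp := sp) (u := u)) => //.
  - by rewrite /wt linear0 scaler0.
  - by move=> x y; rewrite /wt linearD => -> ->; rewrite scalerDr.
  - by move=> c x; rewrite /wt linearZ => ->; rewrite /= scalerA mulrC -scalerA.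
  - move=> x wx; have := wt_p p0N (wt_p (p1N n0) wx).
    by rewrite (dd1 n0) (dd0 n0) subrK.
pose a := - (t / zd) - 1.
have ta : t = - (zd * (a + 1)) by rewrite /a subrK mulrN opprK mulrC divfK.
exists a, lam; split.
- case=> [k|k].
  + by case: (gprop n0 I0 I1 w0 Ww Ew ta k) => _ _ _; rewrite subr_eq0.
  + case: (fprop n0 I0 I1 w0 Ww Ew ta k) => _ _ _; apply: contraNneq => ->.
    by rewrite NegzE intrN -[((k.+1)%:Z)%:~R]/(k.+1%:R : C) addNr.
- exists (eD a w); split; first exact: (eD_basis n0 I0 I1 w0 Ww Ew ta).
  by move=> i0; exact: (eD_rel n0 I0 I1 w0 Ww Ew ta).
Qed.

End Main.

Unset Implicit Arguments.

(* l = n + 1/2;  zd = the nonzero scalar by which z acts. *)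
Theorem mainTheorem15 (C : numClosedFieldType) (V : lmodType C) (n : nat)
    (h z : {linear V -> V}) (p : nat -> {linear V -> V}) (zd lam : C) :
  is_rep n h z p ->
  simple_module n h z p ->
  weight_module h ->
  (forall v, z v = zd *: v) -> zd != 0 ->
  (forall mu, in_supp h mu -> exists m : int, mu = lam + m%:~R) ->
  fin_dim (weight_space h lam) ->
  (n = 0%N ->
     highest_weight_module n h z p \/ lowest_weight_module n h z p \/
     exists a mu : C, (forall m : int, a != m%:~R) /\ iso_D h z p a zd mu) /\
  ((0 < n)%N ->
     highest_weight_module n h z p \/ lowest_weight_module n h z p).
Proof.
move=> rep simp wmod zact zd0 hs hf; split => Hn.
- exact: (case_zero rep simp wmod zact zd0 Hn hs hf).
- exact: (case_pos rep simp wmod zact zd0 Hn hs hf).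
Qed.
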